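(* Let $\Lambda=(\Delta,R)$ be a gentle bound quiver. If $\sigma$ is a maximal path in $\Lambda$, then the coextension $[\sigma]\Lambda$ is a gentle bound quiver.
   Context: Paths $\alpha_1\cdots\alpha_l$ ($l\ge1$) satisfy $s\alpha_i=t\alpha_{i+1}$; $t\sigma=t\alpha_1$ and $\alpha_1$ is the terminating arrow of $\sigma$. A bound quiver $(\Delta,R)$ is a finite quiver without isolated vertices with a set $R$ of paths of length $\ge2$ such that for some $n$ every path of length $n$ contains a subpath in $R$. It is gentle if connected and: $R$ consists of paths of length 2; each vertex has at most two outgoing and at most two incoming arrows; for each arrow $\alpha$ there is at most one arrow $\alpha'$ with $s\alpha'=t\alpha$ and $\alpha'\alpha\notin R$, at most one with $t\alpha'=s\alpha$ and $\alpha\alpha'\notin R$, at most one with $s\alpha'=t\alpha$ and $\alpha'\alpha\in R$, and at most one with $t\alpha'=s\alpha$ and $\alpha\alpha'\in R$. A path in $\Lambda$ is a path with no subpath in $R$; it is maximal if not a subpath of a longer path in $\Lambda$. For a maximal path $\sigma$ in $\Lambda$, the coextension $[\sigma]\Lambda=(\Delta',R')$ is defined by: $\Delta'$ is $\Delta$ with a new vertex $x$ and a new arrow $\alpha$ with $s\alpha=t\sigma$, $t\alpha=x$; $R'=R\cup\{\alpha\alpha' : \alpha'\in\Delta_1,\ t\alpha'=t\sigma,\ \alpha'\text{ is not the terminating arrow of }\sigma\}$. *)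

(* Defs.v *)
From mathcomp Require Import all_boot.
Set Implicit Arguments. Unset Strict Implicit. Unset Printing Implicit Defensive.

(* A path alpha_1 ... alpha_l (l >= 1) is the sequence
   [:: alpha_1; ...; alpha_l] with s alpha_i = t alpha_(i+1); its terminating
   arrow is alpha_1 and t sigma = t alpha_1. *)

Section Quivers.
Variables (V A : finType) (s t : A -> V).

Definition is_qpath (p : seq A) : bool :=
  (0 < size p) && sorted (fun a b => s a == t b) p.

Variable R : seq A -> Prop.

Definition bound_quiver : Prop :=
  (forall v : V, exists a : A, s a = v \/ t a = v) /\
  (forall p, R p -> is_qpath p /\ 2 <= size p) /\
  (exists n, 1 <= n /\
     forall p, is_qpath p -> size p = n -> exists r, R r /\ infix r p).

Definition qadj : rel V :=
  fun u v => [exists a : A, ((s a == u) && (t a == v)) || ((s a == v) && (t a == u))].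

Definition qconnected : Prop := forall u v : V, connect qadj u v.

Definition at_most_one (P : A -> Prop) : Prop :=
  forall a1 a2, P a1 -> P a2 -> a1 = a2.

Definition gentle : Prop :=
  bound_quiver /\
  qconnected /\
  (forall p, R p -> size p = 2) /\
  (forall v : V, #|[set a | s a == v]| <= 2 /\ #|[set a | t a == v]| <= 2) /\
  (forall al : A,
     at_most_one (fun a' => s a' = t al /\ ~ R [:: a'; al]) /\
     at_most_one (fun a' => t a' = s al /\ ~ R [:: al; a']) /\
     at_most_one (fun a' => s a' = t al /\ R [:: a'; al]) /\
     at_most_one (fun a' => t a' = s al /\ R [:: al; a'])).

Definition path_in (p : seq A) : Prop :=
  is_qpath p /\ forall q, infix q p -> ~ R q.

Definition maximal_path (p : seq A) : Prop :=
  path_in p /\ forall q, path_in q -> infix p q -> size q = size p.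

(* Coextension [sigma]Lambda: vertices option V (None = new vertex x),
   arrows option A (None = new arrow alpha with s alpha = t sigma, t alpha = x). *)
Variable sigma : seq A.

Definition tsigma : option V :=
  if sigma is a :: _ then Some (t a) else None.

Definition coext_s (a : option A) : option V :=
  if a is Some b then Some (s b) else tsigma.

Definition coext_t (a : option A) : option V :=
  if a is Some b then Some (t b) else None.

Definition coext_R (p : seq (option A)) : Prop :=
  (exists r, R r /\ p = map Some r) \/
  (exists a', p = [:: None; Some a'] /\ Some (t a') = tsigma /\ ohead sigma <> Some a').

End Quivers.

(* Main.v *)
Require Import Defs.
From mathcomp Require Import all_boot.
From Stdlib Require Import Classical.

Lemma card_opt (A : finType) (P : pred (option A)) :
  #|[set a | P a]| = P None + #|[set a | P (Some a)]|.
Proof.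
rewrite !cardsE !cardE /enum_mem !size_filter.
rewrite unlock /= count_map. congr (_ + _). rewrite unlock. done.
Qed.

Lemma infix_mapS (T U : eqType) (f : T -> U) (r q : seq T) :
  infix r q -> infix (map f r) (map f q).
Proof.
case/infixP => [x [y ->]]. apply/infixP. exists (map f x), (map f y).
by rewrite !map_cat.
Qed.

Lemma coextR_SS (V A : finType) (t : A -> V) (R : seq A -> Prop) sigma b c :
  coext_R t R sigma [:: Some b; Some c] <-> R [:: b; c].
Proof.
split.
- case=> [[r [Hr Hm]]|[a' [Ha _]]] //.
  case: r Hr Hm => [|x [|y [|z r]]] //= Hr [E1 E2]; by subst.
- move=> H; left; exists [:: b; c]; split => //.
Qed.

Lemma coextR_NS (V A : finType) (t : A -> V) (R : seq A -> Prop) s1 rest c :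
  coext_R t R (s1 :: rest) [:: None; Some c] <-> t c = t s1 /\ s1 <> c.
Proof.
split.
- case=> [[r [Hr Hm]]|[a' [[<-] [/= [H1] H2]]]].
  + by case: r Hr Hm => [|x r].
  + by split => // E; apply: H2; rewrite E.
- move=> [H1 H2]; right; exists c; split => //=; split; first by rewrite H1.
  by move=> [E]; apply: H2.
Qed.

Lemma sorted_coext (V A : finType) (s t : A -> V) (s1 : A) (rest : seq A) l :
  forall x, sorted (fun a b => coext_s s t (s1 :: rest) a == coext_t t b) (x :: l) ->
  exists2 q, l = map Some q & sorted (fun a b => s a == t b) q.
Proof.
elim: l => [|y l IH] x /=; first by move=> _; exists [::].
case/andP => Hxy Hp.
case: (IH y Hp) => q Hl Hq.
case: y Hxy Hp Hl => [c|] Hxy Hp Hl; last first.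
  exfalso; move: Hxy; case: x => [b|] //=; done.
exists (c :: q); first by rewrite Hl.
case: q Hq Hl => [|d q] //= Hq Hl. rewrite Hq andbT.
move: Hp; rewrite Hl /= => /andP [] //.
Qed.

Theorem lemma1p5 (V A : finType) (s t : A -> V) (R : seq A -> Prop)
  (sigma : seq A) :
  gentle s t R -> maximal_path s t R sigma ->
  gentle (coext_s s t sigma) (coext_t t) (coext_R t R sigma).
Proof.
move=> [[Hiso [HRp [n [Hn Hadm]]]] [Hconn [HR2 [Hdeg Hloc]]]] [[Hsp Hsinf] Hsmax].
case: sigma Hsp Hsinf Hsmax => [|s1 rest]; first by case.
move=> Hsp Hsinf Hsmax.
have Hmax : forall b, s b = t s1 -> R [:: b; s1].
  move=> b Hb; apply: NNPP => HnR.
  have Hp : path_in s t R (b :: s1 :: rest).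
    split.
    - rewrite /is_qpath /= Hb eqxx /=. by case/andP: Hsp.
    - move=> q; rewrite infix_consl => /orP [Hpre|Hin]; last by apply: Hsinf.
      move=> Rq; have := HR2 _ Rq; move: Hpre Rq.
      rewrite prefixE; case: q => [|x [|y [|z q]]] //= /eqP [<- <-] //.
  have := Hsmax _ Hp (infix_cons _ _) => /= [] E.
  exact: (n_Sn _ (esym E)).
have Hqp : forall q, is_qpath s t q ->
    is_qpath (coext_s s t (s1 :: rest)) (coext_t t) (map Some q).
  move=> q; rewrite /is_qpath size_map sorted_map => /andP [-> H] /=.
  exact: H.
have Hlift : forall u v, connect (qadj s t) u v ->
    connect (qadj (coext_s s t (s1 :: rest)) (coext_t t)) (Some u) (Some v).
  move=> u v /connectP [p Hp ->]; apply/connectP; exists (map Some p).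
  - rewrite path_map; apply: sub_path Hp => a b /existsP [c Hc].
    apply/existsP; exists (Some c); exact: Hc.
  - by rewrite last_map.
have HN1 : qadj (coext_s s t (s1 :: rest)) (coext_t t) None (Some (t s1)).
  apply/existsP; exists None => /=; by rewrite ?eqxx ?orbT.
have HN2 : qadj (coext_s s t (s1 :: rest)) (coext_t t) (Some (t s1)) None.
  apply/existsP; exists None => /=; by rewrite ?eqxx.
split; [split; [|split]|split; [|split; [|split]]].
- case=> [v|]; last by exists None; right.
  case: (Hiso v) => a [H|H]; exists (Some a); [left|right]; by rewrite /= H.
- move=> p [[r [Hr ->]]|[a' [-> [Ht _]]]].
  + case: (HRp r Hr) => H1 H2; split; [exact: Hqp|by rewrite size_map].
  + move: Ht => /= [Ht]; by rewrite /is_qpath /= Ht eqxx.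
- exists n.+1; split => // p Hp Hsz.
  case: p Hp Hsz => [|x l] // Hp [Hsz].
  case: (@sorted_coext _ _ s t s1 rest l x Hp) => q Hl Hq.
  have Hq' : is_qpath s t q by rewrite /is_qpath Hq andbT -(size_map Some) -Hl Hsz.
  have Hsq : size q = n by rewrite -(size_map Some) -Hl.
  case: (Hadm q Hq' Hsq) => r [Hr Hin].
  exists (map Some r); split; first by left; exists r.
  apply: infix_trans (infix_cons l x); rewrite Hl; exact: infix_mapS.
- move=> [u|] [v|].
  + exact: Hlift.
  + apply: connect_trans (Hlift _ _ (Hconn u (t s1))) (connect1 HN2).
  + apply: connect_trans (connect1 HN1) (Hlift _ _ (Hconn (t s1) v)).
  + exact: connect0.
- move=> p [[r [Hr ->]]|[a' [-> _]]] //; by rewrite size_map HR2.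
- have H0 : forall (P : pred A), (forall a, ~~ P a) -> #|[set a | P a]| = 0.
    move=> P HP; apply/eqP; rewrite cards_eq0; apply/eqP/setP => a.
    by rewrite !inE (negbTE (HP a)).
  have HS : forall (f : A -> V) v, [set a | Some (f a) == Some v] = [set a | f a == v].
    by move=> f v; apply/setP => a; rewrite !inE; apply/eqP/eqP => [[->]|->].
  case=> [v|]; rewrite !card_opt /= ?HS.
  + split; last by case: (Hdeg v).
    case: (eqVneq (t s1) v) => [<-|Hne] /=.
    * rewrite eqxx add1n ltnS leqNgt; apply/negP => /card_gt1P [a [b [Ha Hb Hab]]].
      move: Ha Hb; rewrite !inE => /eqP Ha /eqP Hb.
      have := (Hloc s1).2.2.1 a b (conj Ha (Hmax a Ha)) (conj Hb (Hmax b Hb)).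
      by move=> E; rewrite E eqxx in Hab.
    * have -> : (Some (t s1) == Some v) = false by apply/eqP => [[]] /eqP; rewrite (negbTE Hne).
      by case: (Hdeg v).
  + by rewrite !H0.
- have RSS := fun b c => @coextR_SS V A t R (s1 :: rest) b c.
  have RNS := fun c => @coextR_NS V A t R s1 rest c.
  have hN : forall b, t b = t s1 -> ~ coext_R t R (s1 :: rest) [:: None; Some b] -> b = s1.
    move=> b Hb N; apply/eqP/negPn/negP => Hne; apply: N; apply/RNS; split => //.
    by move=> E; rewrite E eqxx in Hne.
  case=> [c|]; (split; [|split; [|split]]).
  + move=> [b1|] [b2|] /= [H1 N1] [H2 N2]; try discriminate; try reflexivity.
    * congr Some; apply: (Hloc c).1; [split|split];
        [by case: H1|by move=> Hr; apply: N1; apply/RSS|by case: H2|by move=> Hr; apply: N2; apply/RSS].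
    * case: H2 => H2; have Ec := hN c (esym H2) N2; subst c.
      exfalso; apply: N1; apply/RSS; apply: Hmax; by case: H1.
    * case: H1 => H1; have Ec := hN c (esym H1) N1; subst c.
      exfalso; apply: N2; apply/RSS; apply: Hmax; by case: H2.
  + move=> [b1|] [b2|] /= [H1 N1] [H2 N2]; try discriminate; try reflexivity.
    congr Some; apply: (Hloc c).2.1; [split|split];
        [by case: H1|by move=> Hr; apply: N1; apply/RSS|by case: H2|by move=> Hr; apply: N2; apply/RSS].
  + move=> [b1|] [b2|] /= [H1 N1] [H2 N2]; try discriminate; try reflexivity.
    * congr Some; apply: (Hloc c).2.2.1; [split|split];
        [by case: H1|by apply/RSS|by case: H2|by apply/RSS].
    * case/RNS: N2 => Hc Hne; case: H1 => H1; move/RSS: N1 => N1.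
      exfalso; apply: Hne; apply: (Hloc b1).2.2.2; split; last exact: N1.
      - by rewrite H1 Hc.
      - by apply: Hmax; rewrite H1 Hc.
      - by rewrite H1.
    * case/RNS: N1 => Hc Hne; case: H2 => H2; move/RSS: N2 => N2.
      exfalso; apply: Hne; apply: (Hloc b2).2.2.2; split; last exact: N2.
      - by rewrite H2 Hc.
      - by apply: Hmax; rewrite H2 Hc.
      - by rewrite H2.
  + move=> [b1|] [b2|] /= [H1 N1] [H2 N2]; try discriminate; try reflexivity.
    congr Some; apply: (Hloc c).2.2.2; [split|split];
        [by case: H1|by apply/RSS|by case: H2|by apply/RSS].
  + by move=> [b1|] [b2|] /= [H1 N1]; try discriminate.
  + move=> [b1|] [b2|] /= [H1 N1] [H2 N2]; try discriminate; try reflexivity.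
    case: H1 => H1; case: H2 => H2.
    by rewrite (hN _ H1 N1) (hN _ H2 N2).
  + by move=> [b1|] [b2|] /= [H1 N1]; try discriminate.
  + move=> [b1|] [b2|] /= [H1 N1] [H2 N2]; try discriminate; try reflexivity.
    case: H1 => H1; case: H2 => H2.
    case/RNS: N1 => _ N1; case/RNS: N2 => _ N2.
    congr Some; apply/eqP/negPn/negP => Hne.
    case: (Hdeg (t s1)) => _; rewrite leqNgt => /negP; apply.
    apply/card_gt2P; exists b1, b2, s1; split; first by rewrite !inE H1 H2 !eqxx.
    split => //; apply/negP => /eqP E; [apply: N2|apply: N1]; by rewrite E.
Qed.
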